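(* Let $\mathbf A=(\mathbf a_1,\ldots,\mathbf a_m)^\top\in\mathbb C^{m\times d}$ and $\mathbf b=(b_1,\ldots,b_m)^\top\in\mathbb C^m$. Then the following are equivalent: (A) $(\mathbf A,\mathbf b)$ is affine phase retrievable for $\mathbb C^d$. (B) The map $\mathbf M^2_{\mathbf A,\mathbf b}$ is injective on $\mathbb C^d$. (C) For any $\mathbf u,\mathbf v\in\mathbb C^d$ with $\mathbf u\neq0$, there exists $1\le k\le m$ such that $\mathrm{Re}\big(\langle\mathbf u,\mathbf a_k\rangle(\langle\mathbf a_k,\mathbf v\rangle+b_k)\big)\neq 0$. (D) Viewing $\mathbf M^2_{\mathbf A,\mathbf b}$ as a map $\mathbb R^{2d}\to\mathbb R^m$ (via $\mathbf x=\mathbf x_R+i\mathbf x_I\leftrightarrow(\mathbf x_R,\mathbf x_I)$), its real Jacobian $J(\mathbf x)$ has rank $2d$ for all $\mathbf x\in\mathbb R^{2d}$.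
   Context: For $\mathbf u,\mathbf v\in\mathbb C^d$, $\langle\mathbf u,\mathbf v\rangle=\sum_i\overline{u_i}v_i$. Define $\mathbf M_{\mathbf A,\mathbf b}(\mathbf x)=(|\langle\mathbf a_1,\mathbf x\rangle+b_1|,\ldots,|\langle\mathbf a_m,\mathbf x\rangle+b_m|)$ and $\mathbf M^2_{\mathbf A,\mathbf b}(\mathbf x)=(|\langle\mathbf a_1,\mathbf x\rangle+b_1|^2,\ldots,|\langle\mathbf a_m,\mathbf x\rangle+b_m|^2)$. $(\mathbf A,\mathbf b)$ is called affine phase retrievable for $\mathbb C^d$ if $\mathbf M_{\mathbf A,\mathbf b}$ is injective on $\mathbb C^d$. *)

(* Defs.v *)
From HB Require Import structures.
From mathcomp Require Import all_boot all_order all_algebra.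
From mathcomp Require Import complex.
From mathcomp Require Import all_classical all_reals all_analysis.
Set Implicit Arguments. Unset Strict Implicit. Unset Printing Implicit Defensive.
Import Order.TTheory GRing.Theory Num.Theory.
Import numFieldNormedType.Exports.
Local Open Scope ring_scope.
Local Open Scope complex_scope.

Section AffinePR.
Variable R : realType.
Local Notation C := (R[i]).

Definition cinner d (u v : 'cV[C]_d) : C := \sum_(i < d) (u i 0)^* * v i 0.

Definition arow m d (A : 'M[C]_(m, d)) (k : 'I_m) : 'cV[C]_d := (row k A)^T.

Definition affmeas m d (A : 'M[C]_(m, d)) (b : 'cV[C]_m) (x : 'cV[C]_d) (k : 'I_m) : C :=
  cinner (arow A k) x + b k 0.

Definition MAb m d (A : 'M[C]_(m, d)) (b : 'cV[C]_m) (x : 'cV[C]_d) : 'cV[C]_m :=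
  \col_k `|affmeas A b x k|.

Definition M2Ab m d (A : 'M[C]_(m, d)) (b : 'cV[C]_m) (x : 'cV[C]_d) : 'cV[C]_m :=
  \col_k (`|affmeas A b x k| ^+ 2).

Definition affine_phase_retrievable m d (A : 'M[C]_(m, d)) (b : 'cV[C]_m) : Prop :=
  injective (MAb A b).

Definition toCvec d (y : 'rV[R]_(d + d)) : 'cV[C]_d :=
  \col_i (y 0 (lshift d i) +i* y 0 (rshift d i)).

(* M^2_{A,b} viewed as a map R^{2d} -> R^m (its values are real) *)
Definition M2Ab_real m d (A : 'M[C]_(m, d)) (b : 'cV[C]_m) (y : 'rV[R]_(d + d)) : 'rV[R]_m :=
  \row_k complex.Re (M2Ab A b (toCvec y) k 0).

End AffinePR.

(* Main.v *)
Require Import Defs.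
From HB Require Import structures.
From mathcomp Require Import all_boot all_order all_algebra.
From mathcomp Require Import complex.
From mathcomp Require Import all_classical all_reals all_analysis.
From mathcomp Require Import ring lra.
Import Order.TTheory GRing.Theory Num.Theory.
Import numFieldNormedType.Exports.
Local Open Scope ring_scope.
Local Open Scope complex_scope.

Section Alg.
Variable R : realType.
Local Notation C := (R[i]).

Definition S2 (z : C) : R := complex.Re z ^+ 2 + complex.Im z ^+ 2.

Lemma normS2 (z : C) : `|z| ^+ 2 = (S2 z)%:C.
Proof. by rewrite /S2 add_Re2_Im2. Qed.

Lemma norm_eq_S2 (z w : C) : (`|z| = `|w|) <-> (S2 z = S2 w).
Proof.
split=> [h|h]; first by apply: complexI; rewrite -!normS2 h.
by rewrite !normc_def -/(S2 z) -/(S2 w) h.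
Qed.

Lemma ReS2 (z : C) : complex.Re (`|z| ^+ 2) = S2 z.
Proof. by rewrite normS2. Qed.

Lemma Re_conj_id (P Q : C) :
  complex.Re ((P - Q)^* * (P + Q)) = S2 P - S2 Q.
Proof. case: P => a b; case: Q => c e; rewrite /S2 /=. ring. Qed.

Lemma Re_half (X : C) : complex.Re (2^-1 * X) = 2^-1 * complex.Re X.
Proof.
case: X => a b /=. idtac.
rewrite (_ : (1 + 1 : R) = 2) // (_ : (0 + 0 : R) = 0) ?addr0 //. by field.
Qed.

Lemma cinnerD d (a x y : 'cV[C]_d) : cinner a (x + y) = cinner a x + cinner a y.
Proof. by rewrite /cinner -big_split; apply: eq_bigr => i _; rewrite mxE mulrDr. Qed.

Lemma cinnerN d (a x : 'cV[C]_d) : cinner a (- x) = - cinner a x.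
Proof. by rewrite /cinner -sumrN; apply: eq_bigr => i _; rewrite mxE mulrN. Qed.

Lemma cinnerZ d (a x : 'cV[C]_d) c : cinner a (c *: x) = c * cinner a x.
Proof. by rewrite /cinner mulr_sumr; apply: eq_bigr => i _; rewrite mxE mulrCA. Qed.

Lemma cinnerC d (a x : 'cV[C]_d) : cinner x a = (cinner a x)^*.
Proof.
rewrite /cinner rmorph_sum; apply: eq_bigr => i _.
by rewrite /= rmorphM /= conjcK mulrC.
Qed.


Section Eqs.
Variables (m d : nat) (A : 'M[C]_(m, d)) (b : 'cV[C]_m).

Lemma M2_eq x y : M2Ab A b x = M2Ab A b y <->
  forall k, S2 (affmeas A b x k) = S2 (affmeas A b y k).
Proof.
split=> [/colP h k | h].
  by move: (h k); rewrite !mxE !normS2 => /complexI.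
by apply/colP => k; rewrite !mxE !normS2 h.
Qed.

Lemma M_eq x y : MAb A b x = MAb A b y <->
  forall k, S2 (affmeas A b x k) = S2 (affmeas A b y k).
Proof.
split=> [/colP h k | h].
  by move: (h k); rewrite !mxE => /norm_eq_S2.
by apply/colP => k; rewrite !mxE; apply/norm_eq_S2.
Qed.

Lemma AB : affine_phase_retrievable A b <-> injective (M2Ab A b).
Proof.
split=> h x y hxy; apply: h.
  by apply/M_eq; apply/(M2_eq x y).
by apply/M2_eq; apply/(M_eq x y).
Qed.

Lemma BC : injective (M2Ab A b) <->
  (forall u v : 'cV[C]_d, u != 0 ->
          exists k : 'I_m,
            complex.Re (cinner u (arow A k) * (cinner (arow A k) v + b k 0)) != 0).
Proof.
split.
  move=> inj u v un0; apply: contrapT => nex.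
  have H k : complex.Re (cinner u (arow A k) * (cinner (arow A k) v + b k 0)) = 0.
    by apply/eqP; apply/negPn/negP => hk; apply: nex; exists k.
  have : v + u = v - u.
    apply: inj; apply/M2_eq => k; apply/eqP; rewrite -subr_eq0; apply/eqP.
    rewrite -Re_conj_id /affmeas !cinnerD cinnerN.
    set Z := cinner (arow A k) u; set W := cinner (arow A k) v + b k 0.
    have -> : cinner (arow A k) v + Z + b k 0 - (cinner (arow A k) v + - Z + b k 0) = Z *+ 2.
      by rewrite /W; rewrite mulr2n; ring.
    have -> : cinner (arow A k) v + Z + b k 0 + (cinner (arow A k) v + - Z + b k 0) = W *+ 2.
      by rewrite /W mulr2n; ring.
    have H' := H k; rewrite cinnerC in H'.
    rewrite rmorphMn mulrnAl mulrnAr -mulrnA raddfMn /= /Z /W.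
    by rewrite H' mul0rn.
  move/addrI => /eqP; rewrite -subr_eq0 opprK -mulr2n -scaler_nat scaler_eq0.
  by rewrite pnatr_eq0 (negbTE un0).
move=> hC x y heq; apply: contrapT => nxy.
have un0 : x - y != 0 by rewrite subr_eq0; apply/eqP.
have [k] := hC (x - y) ((2^-1 : C) *: (x + y)) un0.
have := (M2_eq x y).1 heq k; rewrite /affmeas => hS.
rewrite cinnerC cinnerD cinnerN cinnerZ cinnerD.
set P := cinner (arow A k) x + b k 0 in hS *; set Q := cinner (arow A k) y + b k 0 in hS *.
have -> : cinner (arow A k) x + - cinner (arow A k) y = P - Q by rewrite /P /Q; ring.
have -> : 2^-1 * (cinner (arow A k) x + cinner (arow A k) y) + b k 0 = 2^-1 * (P + Q).
  rewrite /P /Q; by field.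
by rewrite mulrCA Re_half Re_conj_id hS subrr mulr0 eqxx.
Qed.

End Eqs.
End Alg.

Set Implicit Arguments. Unset Strict Implicit.

Section An.
Variable R : realType.
Variable n : nat.
Local Notation V := 'rV[R]_n.

Definition lin (c : V) (y : V) : R := \sum_(j < n) c 0 j * y 0 j.

Lemma lin_differentiable c x : differentiable (lin c) x.
Proof.
have -> : lin c = \sum_(j < n) (c 0 j *: (fun y : V => y 0 j)).
  by apply/funext => y; rewrite /lin fct_sumE.
apply: differentiable_sum => j; apply: differentiableZ; exact: differentiable_coord.
Qed.

Lemma lin_is_linear c : linear (lin c).
Proof.
move=> a u v; rewrite /lin scaler_sumr -big_split; apply: eq_bigr => j _.
by rewrite !mxE /= mulrDr mulrCA.
Qed.

Lemma diff_lin' c x : 'd (lin c) x = lin c :> (V -> R).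
Proof.
pose LM := GRing.isLinear.Build _ _ _ _ _ (lin_is_linear c).
pose LL : {linear V -> R} := HB.pack (lin c) LM.
rewrite -[lin c]/(LL : V -> R) diff_lin //.
move=> y; exact: (differentiable_continuous (lin_differentiable c y)).
Qed.


Definition quad (c1 c2 : V) (e1 e2 : R) (y : V) : R :=
  (lin c1 y + e1) * (lin c1 y + e1) + (lin c2 y + e2) * (lin c2 y + e2).

Lemma sq_diff (f g df dg : V -> R) x :
  differentiable f x -> differentiable g x ->
  'd f x = df :> (V -> R) -> 'd g x = dg :> (V -> R) ->
  differentiable (f * f + g * g) x /\
  forall h, 'd (f * f + g * g) x h = 2 * (f x * df h + g x * dg h).
Proof.
move=> d1 d2 dd1 dd2.
have m1 := differentiableM d1 d1; have m2 := differentiableM d2 d2.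
split; first exact: differentiableD.
move=> h.
have E : 'd (f * f + g * g) x = (fun y => f x * df y + f x * df y + (g x * dg y + g x * dg y)) :> (V -> R).
  rewrite (diffD m1 m2) (diffM d1 d1) (diffM d2 d2) dd1 dd2.
  by [].
rewrite E; ring.
Qed.

Lemma quad_diff c1 c2 e1 e2 x :
  differentiable (quad c1 c2 e1 e2) x /\
  forall h, 'd (quad c1 c2 e1 e2) x h =
    2 * ((lin c1 x + e1) * lin c1 h + (lin c2 x + e2) * lin c2 h).
Proof.
have dF c e : differentiable (lin c + cst e) x.
  by apply: differentiableD; [exact: lin_differentiable | exact: differentiable_cst].
have ddF c e : 'd (lin c + cst e) x = lin c :> (V -> R).
  rewrite diffD ?diff_lin' ?diff_cst; [|exact: lin_differentiable | exact: differentiable_cst].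
  by apply/funext=> h /=; rewrite addr0.
have -> : quad c1 c2 e1 e2 = (lin c1 + cst e1) * (lin c1 + cst e1) + (lin c2 + cst e2) * (lin c2 + cst e2) by apply/funext.
have [H1 H2] := sq_diff (dF c1 e1) (dF c2 e2) (ddF c1 e1) (ddF c2 e2).
split => // h; rewrite H2 !fctE //.
Qed.

Lemma rowfun_diff (m : nat) (G : 'I_m -> V -> R) x :
  (forall k, differentiable (G k) x) ->
  differentiable (fun y => \row_k G k y) x /\
  forall h, 'D_h (fun y => \row_k G k y) x = \row_k 'd (G k) x h.
Proof.
move=> hG.
have dF : differentiable (fun y => \row_k G k y) x.
  have -> : (fun y => \row_k G k y) = \sum_(k < m) (fun y => G k y *: 'e_k).
    apply/funext => y; rewrite fct_sumE [LHS]row_sum_delta.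
    by apply: eq_bigr => k _; rewrite mxE.
  apply: differentiable_sum => k; exact: differentiableZl.
split => // h.
rewrite derive_mx; last exact: diff_derivable.
apply/matrixP => i k; rewrite !mxE.
have -> : (fun t => (\row_k0 G k0 t) i k) = G k by apply/funext => t; rewrite mxE.
by rewrite deriveE.
Qed.

End An.

Unset Implicit Arguments. Set Strict Implicit.

Section Link.
Variable R : realType.
Local Notation C := (R[i]).

Lemma ReD (x y : C) : complex.Re (x + y) = complex.Re x + complex.Re y.
Proof. by case: x => ? ?; case: y. Qed.
Lemma ImD (x y : C) : complex.Im (x + y) = complex.Im x + complex.Im y.
Proof. by case: x => ? ?; case: y. Qed.
Lemma Re0 : complex.Re (0 : C) = 0. Proof. by []. Qed.
Lemma Im0 : complex.Im (0 : C) = 0. Proof. by []. Qed.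

Variables (m d : nat) (A : 'M[C]_(m, d)) (b : 'cV[C]_m).

Definition c1 (k : 'I_m) : 'rV[R]_(d + d) :=
  row_mx (\row_i complex.Re (A k i)) (\row_i complex.Im (A k i)).
Definition c2 (k : 'I_m) : 'rV[R]_(d + d) :=
  row_mx (\row_i - complex.Im (A k i)) (\row_i complex.Re (A k i)).

Lemma Re_cinner y k : complex.Re (cinner (arow A k) (toCvec y)) = lin (c1 k) y.
Proof.
rewrite /cinner /lin big_split_ord /= (big_morph _ ReD Re0) -big_split /=.
apply: eq_bigr => i _; rewrite /arow /c1 row_mxEl row_mxEr !mxE.
case: (A k i) => p q /=; ring.
Qed.

Lemma Im_cinner y k : complex.Im (cinner (arow A k) (toCvec y)) = lin (c2 k) y.
Proof.
rewrite /cinner /lin big_split_ord /= (big_morph _ ImD Im0) -big_split /=.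
apply: eq_bigr => i _; rewrite /arow /c2 row_mxEl row_mxEr !mxE.
case: (A k i) => p q /=; ring.
Qed.

Definition Gk (k : 'I_m) := quad (c1 k) (c2 k) (complex.Re (b k 0)) (complex.Im (b k 0)).

Lemma fE : M2Ab_real A b = (fun y => \row_k Gk k y).
Proof.
apply/funext => y; apply/rowP => k; rewrite !mxE ReS2 /S2 /affmeas /Gk /quad.
by rewrite ReD ImD Re_cinner Im_cinner !expr2.
Qed.

Lemma JE x h : h *m 'J (M2Ab_real A b) x =
  \row_k (2 * complex.Re (cinner (toCvec h) (arow A k) *
                          (cinner (arow A k) (toCvec x) + b k 0))).
Proof.
rewrite fE.
have [dF dD] := rowfun_diff (G := Gk) (x := x) (fun k => (quad_diff _ _ _ _ x).1).
rewrite -deriveEjacobian // dD; apply/rowP => k; rewrite !mxE.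
rewrite (quad_diff _ _ _ _ x).2 cinnerC.
rewrite -!Re_cinner -!Im_cinner.
case: (cinner (arow A k) (toCvec h)) => p q.
case: (cinner (arow A k) (toCvec x)) => r s.
case: (b k 0) => t w /=. ring.
Qed.

End Link.


Section Fin.
Variable R : realType.
Local Notation C := (R[i]).
Variables (m d : nat) (A : 'M[C]_(m, d)) (b : 'cV[C]_m).

Definition fromC (w : 'cV[C]_d) : 'rV[R]_(d + d) :=
  row_mx (\row_i complex.Re (w i 0)) (\row_i complex.Im (w i 0)).

Lemma toCvec_fromC w : toCvec (fromC w) = w.
Proof.
apply/colP => i; rewrite /toCvec mxE /fromC row_mxEl row_mxEr !mxE.
by case: (w i 0).
Qed.

Lemma toCvec0 : toCvec (0 : 'rV[R]_(d + d)) = 0.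
Proof. by apply/colP => i; rewrite !mxE. Qed.

Lemma toCvec_inj0 (h : 'rV[R]_(d + d)) : toCvec h = 0 -> h = 0.
Proof.
move=> H; apply/rowP => j; rewrite mxE.
have e (i : 'I_d) := congr1 (fun M : 'cV[C]_d => M i 0) H.
case: (split_ordP j) => i ->; have := e i; rewrite !mxE => -[] //.
Qed.

Lemma CD :
  (forall u v : 'cV[C]_d, u != 0 ->
          exists k : 'I_m,
            complex.Re (cinner u (arow A k) * (cinner (arow A k) v + b k 0)) != 0) <->
  (forall x : 'rV[R]_(d + d), \rank (derive.jacobian (M2Ab_real A b) x) = (d + d)%N).
Proof.
split.
  move=> hC x; apply/eqP; apply: inj_row_free => v hv.
  apply: contrapT => vn0.
  have un0 : toCvec v != 0 by apply/eqP => /toCvec_inj0.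
  have [k hk] := hC _ (toCvec x) un0.
  have := congr1 (fun M : 'rV[R]_m => M 0 k) hv; rewrite JE !mxE => /eqP.
  by rewrite mulf_eq0 pnatr_eq0 /= (negbTE hk).
move=> hD u v un0.
set h := fromC u.
have hv : h *m 'J (M2Ab_real A b) (fromC v) != 0.
  apply/eqP => e.
  have rf : row_free ('J (M2Ab_real A b) (fromC v)) by rewrite /row_free hD.
  rewrite -(mul0mx _ ('J (M2Ab_real A b) (fromC v))) in e.
  have h0 := row_free_inj rf e.
  by move: un0; rewrite -(toCvec_fromC u) -/h h0 toCvec0 eqxx.
have [k hk] : exists k, (h *m 'J (M2Ab_real A b) (fromC v)) 0 k != 0.
  apply: contrapT => nex; apply: (negP hv); apply/eqP/rowP => k; rewrite [RHS]mxE.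
  by apply/eqP; apply/negPn/negP => hk; apply: nex; exists k.
rewrite JE [X in X != 0]mxE !toCvec_fromC in hk; exists k.
by move: hk; rewrite mulf_eq0 negb_or => /andP[].
Qed.

End Fin.

Theorem theorem3p1 (R : realType) (m d : nat)
    (A : 'M[R[i]]_(m, d)) (b : 'cV[R[i]]_m) :
  [<-> affine_phase_retrievable A b;
       injective (M2Ab A b);
       (forall u v : 'cV[R[i]]_d, u != 0 ->
          exists k : 'I_m,
            complex.Re (cinner u (arow A k) * (cinner (arow A k) v + b k 0)) != 0);
       (forall x : 'rV[R]_(d + d), \rank (derive.jacobian (M2Ab_real A b) x) = (d + d)%N)].
Proof.
have [ab ba] := @AB _ _ _ A b; have [bc cb] := @BC _ _ _ A b; have [cd dc] := @CD _ _ _ A b.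
split; [exact: ab | split; [exact: bc | split; [exact: cd | ]]].
by move=> /dc /cb /ba.
Qed.
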